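(* Fix $\gamma\in(0,\pi/2)$ and set $v^2:=\dfrac{2\cos^2\gamma}{1+\cos^2\gamma}$ with $v>0$. Let $\mathcal U\subset\mathbb R^2$ be open, and let $T(\tau,\sigma)=\tau$ and $Y:\mathcal U\to\mathbb R^{D-1}$ be $C^2$ with $Y'^2>0$. Assume that on $\mathcal U$ $$\dot Y^2=\sin^2\gamma,\qquad Y'^2=\cos^2\gamma,\qquad (\dot Y,Y')=0 .$$ Then $(T,Y)$ satisfies the Euler–Lagrange equations of $L_{ns}$ on $\mathcal U$ if and only if $$v^2\,\ddot Y_i-Y''_i=0\qquad\text{for all } i=1,\dots,D-1 .$$
   Context: Coordinates on $\mathcal U$ are $(\tau,\sigma)$; dot and prime denote $\partial_\tau$, $\partial_\sigma$. For vectors in $\mathbb R^{D-1}$, $(\cdot,\cdot)$ is the Euclidean scalar product and $V^2=(V,V)$. Fix a constant $\rho>0$. Define $$A^2:=\dot T^2Y'^2+T'^2\dot Y^2-2\dot TT'(\dot Y,Y'),\qquad N:=\dot Y^2Y'^2-(\dot Y,Y')^2,$$ and the nonrelativistic string Lagrangian density (with $c=1$), regarded as a function of $(\dot T,T',\dot Y,Y')$ on the region $A^2>0$: $$L_{ns}:=\rho\Big[\frac{N}{2\sqrt{A^2}}-\sqrt{A^2}\Big].$$ The Euler–Lagrange equations of $L_{ns}$ are $$\partial_\tau\frac{\partial L_{ns}}{\partial\dot T}+\partial_\sigma\frac{\partial L_{ns}}{\partial T'}=0,\qquad \partial_\tau\frac{\partial L_{ns}}{\partial\dot Y^i}+\partial_\sigma\frac{\partial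 L_{ns}}{\partial Y'^i}=0\quad(i=1,\dots,D-1),$$ where the partial derivatives of $L_{ns}$ are evaluated along $(T,Y)$. *)

(* Defs.v *)
From Stdlib Require Import Reals List.
From Coquelicot Require Import Coquelicot.
Open Scope R_scope.

(* Components of vectors in R^(D-1) are indexed by i = 1, ..., D-1;
   a vector is a function nat -> R (values outside 1..D-1 are irrelevant). *)
Definition idx (D : nat) : list nat := List.seq 1 (D - 1).

Definition dotD (D : nat) (p q : nat -> R) : R :=
  fold_right Rplus 0 (map (fun i => p i * q i) (idx D)).

(* A^2 and N as functions of (Tdot, T', Ydot, Y') = (a, b, p, q). *)
Definition A2 (D : nat) (a b : R) (p q : nat -> R) : R :=
  a ^ 2 * dotD D q q + b ^ 2 * dotD D p p - 2 * a * b * dotD D p q.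

Definition Nns (D : nat) (p q : nat -> R) : R :=
  dotD D p p * dotD D q q - (dotD D p q) ^ 2.

(* The nonrelativistic string Lagrangian density (c = 1). *)
Definition Lns (D : nat) (rho a b : R) (p q : nat -> R) : R :=
  rho * (Nns D p q / (2 * sqrt (A2 D a b p q)) - sqrt (A2 D a b p q)).

Definition upd (p : nat -> R) (i : nat) (x : R) : nat -> R :=
  fun j => if Nat.eqb j i then x else p j.

Definition dL_dTdot D rho a b p q := Derive (fun a' => Lns D rho a' b p q) a.
Definition dL_dTp D rho a b p q := Derive (fun b' => Lns D rho a b' p q) b.
Definition dL_dYdot D rho (i : nat) a b (p q : nat -> R) :=
  Derive (fun x => Lns D rho a b (upd p i x) q) (p i).
Definition dL_dYp D rho (i : nat) a b (p q : nat -> R) :=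
  Derive (fun x => Lns D rho a b p (upd q i x)) (q i).

(* Partial derivatives d/dtau (dot) and d/dsigma (prime) of f(tau, sigma). *)
Definition dtau (f : R -> R -> R) (t s : R) : R := Derive (fun t' => f t' s) t.
Definition dsig (f : R -> R -> R) (t s : R) : R := Derive (fun s' => f t s') s.

Definition along (F : R -> R -> (nat -> R) -> (nat -> R) -> R)
  (T : R -> R -> R) (Y : nat -> R -> R -> R) (t s : R) : R :=
  F (dtau T t s) (dsig T t s) (fun j => dtau (Y j) t s) (fun j => dsig (Y j) t s).

Definition EulerLagrange (D : nat) (rho : R) (U : R * R -> Prop)
  (T : R -> R -> R) (Y : nat -> R -> R -> R) : Prop :=
  forall t s, U (t, s) ->
    dtau (along (dL_dTdot D rho) T Y) t s + dsig (along (dL_dTp D rho) T Y) t s = 0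
    /\ forall i, In i (idx D) ->
       dtau (along (dL_dYdot D rho i) T Y) t s
       + dsig (along (dL_dYp D rho i) T Y) t s = 0.

Definition C1_on (U : R * R -> Prop) (f : R -> R -> R) : Prop :=
  forall t s, U (t, s) ->
    continuous (fun z : R * R => f (fst z) (snd z)) (t, s)
    /\ ex_derive (fun t' => f t' s) t
    /\ ex_derive (fun s' => f t s') s
    /\ continuous (fun z : R * R => dtau f (fst z) (snd z)) (t, s)
    /\ continuous (fun z : R * R => dsig f (fst z) (snd z)) (t, s).

Definition C2_on (U : R * R -> Prop) (f : R -> R -> R) : Prop :=
  C1_on U f /\ C1_on U (dtau f) /\ C1_on U (dsig f).

(* Main.v *)
Require Import Defs.
From Stdlib Require Import Reals List Lra.
From Coquelicot Require Import Coquelicot.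
Open Scope R_scope.

Lemma sum_upd (l : list nat) i (u : R) (v : nat -> R) : NoDup l -> In i l ->
  fold_right Rplus 0 (map (fun j => if Nat.eqb j i then u else v j) l)
  = fold_right Rplus 0 (map v l) - v i + u.
Proof.
  induction l as [|a l IH]; intros Hnd Hin; [destruct Hin|].
  inversion Hnd; subst. simpl.
  destruct (Nat.eqb a i) eqn:E.
  - apply Nat.eqb_eq in E; subst.
    rewrite (map_ext_in _ v). 2:{ intros j Hj. destruct (Nat.eqb j i) eqn:E2; auto.
      apply Nat.eqb_eq in E2; subst; contradiction. }
    ring.
  - destruct Hin as [Hin|Hin]. { subst. rewrite Nat.eqb_refl in E; discriminate. }
    rewrite IH; auto. ring.
Qed.

Lemma dot_upd_l D p q i x : In i (idx D) ->
  dotD D (upd p i x) q = dotD D p q - p i * q i + x * q i.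
Proof.
  intro H. unfold dotD.
  rewrite (map_ext (fun j => upd p i x j * q j)
     (fun j => if Nat.eqb j i then x * q i else p j * q j)).
  2:{ intro j; unfold upd; destruct (Nat.eqb j i) eqn:E; try (apply Nat.eqb_eq in E; subst); auto. }
  rewrite (sum_upd _ _ _ (fun j => p j * q j)); auto. apply seq_NoDup.
Qed.

Lemma dot_upd_r D p q i x : In i (idx D) ->
  dotD D p (upd q i x) = dotD D p q - p i * q i + p i * x.
Proof.
  intro H. unfold dotD.
  rewrite (map_ext (fun j => p j * upd q i x j)
     (fun j => if Nat.eqb j i then p i * x else p j * q j)).
  2:{ intro j; unfold upd; destruct (Nat.eqb j i) eqn:E; try (apply Nat.eqb_eq in E; subst); auto. }
  rewrite (sum_upd _ _ _ (fun j => p j * q j)); auto. apply seq_NoDup.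
Qed.

Lemma dot_upd_lr D p i x : In i (idx D) ->
  dotD D (upd p i x) (upd p i x) = dotD D p p - p i * p i + x * x.
Proof.
  intro H. unfold dotD.
  rewrite (map_ext (fun j => upd p i x j * upd p i x j)
     (fun j => if Nat.eqb j i then x * x else p j * p j)).
  2:{ intro j; unfold upd; destruct (Nat.eqb j i) eqn:E; try (apply Nat.eqb_eq in E; subst); auto. }
  rewrite (sum_upd _ _ _ (fun j => p j * p j)); auto. apply seq_NoDup.
Qed.

Lemma loc_t (U : R * R -> Prop) t s : open U -> U (t, s) -> locally t (fun t' => U (t', s)).
Proof.
  intros HU H. destruct (HU _ H) as [e He]. exists e. intros y Hy.
  apply He. split; [exact Hy| apply ball_center].
Qed.

Lemma loc_s (U : R * R -> Prop) t s : open U -> U (t, s) -> locally s (fun s' => U (t, s')).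
Proof.
  intros HU H. destruct (HU _ H) as [e He]. exists e. intros y Hy.
  apply He. split; [apply ball_center| exact Hy].
Qed.

Lemma dYdot_val D rho i P Q c : In i (idx D) -> 0 < c ->
  dotD D Q Q = c ^ 2 -> dotD D P Q = 0 ->
  dL_dYdot D rho i 1 0 P Q = rho * c * P i.
Proof.
  intros Hi Hc HQ HPQ. unfold dL_dYdot.
  rewrite (Derive_ext _ (fun x => rho * (((dotD D P P - P i * P i + x * x) * c^2
       - (0 - P i * Q i + x * Q i) ^ 2) / (2 * c) - c))).
  2:{ intro x. unfold Lns, Nns, A2. rewrite dot_upd_lr, dot_upd_l, HQ, HPQ by auto.
      replace (1 ^ 2 * c ^ 2 + 0 ^ 2 * (dotD D P P - P i * P i + x * x) -
        2 * 1 * 0 * (0 - P i * Q i + x * Q i)) with (c ^ 2) by ring.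
      rewrite sqrt_pow2 by lra. reflexivity. }
  apply is_derive_unique. auto_derive; auto. field. lra.
Qed.

Lemma dYp_val D rho i P Q c : In i (idx D) -> 0 < c ->
  dotD D Q Q = c ^ 2 -> dotD D P Q = 0 -> dotD D P P = 1 - c ^ 2 ->
  dL_dYp D rho i 1 0 P Q = - (rho * (1 + c ^ 2) / (2 * c)) * Q i.
Proof.
  intros Hi Hc HQ HPQ HP. unfold dL_dYp.
  rewrite (Derive_ext _ (fun x => rho * (((1 - c^2) * (c^2 - Q i * Q i + x * x)
       - (0 - P i * Q i + P i * x) ^ 2) / (2 * sqrt (c^2 - Q i * Q i + x * x))
       - sqrt (c^2 - Q i * Q i + x * x)))).
  2:{ intro x. unfold Lns, Nns, A2. rewrite dot_upd_lr, dot_upd_r, HQ, HPQ, HP by auto.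
      replace (1 ^ 2 * (c ^ 2 - Q i * Q i + x * x) + 0 ^ 2 * (1 - c ^ 2) -
        2 * 1 * 0 * (0 - P i * Q i + P i * x)) with (c ^ 2 - Q i * Q i + x * x) by ring.
      reflexivity. }
  apply is_derive_unique. auto_derive.
  - replace (c * (c * 1) - Q i * Q i + Q i * Q i) with (c * c) by ring.
    rewrite sqrt_square by lra. repeat split; nra.
  - replace (c * (c * 1) - Q i * Q i + Q i * Q i) with (c * c) by ring.
    rewrite sqrt_square by lra. field. lra.
Qed.

Theorem mainTheorem5 (D : nat) (rho gamma : R) (U : R * R -> Prop)
  (Y : nat -> R -> R -> R) :
  0 < rho ->
  0 < gamma < PI / 2 ->
  open U ->
  (forall i, In i (idx D) -> C2_on U (Y i)) ->
  (forall t s, U (t, s) ->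
     0 < dotD D (fun j => dsig (Y j) t s) (fun j => dsig (Y j) t s)) ->
  (forall t s, U (t, s) ->
     dotD D (fun j => dtau (Y j) t s) (fun j => dtau (Y j) t s) = (sin gamma) ^ 2
     /\ dotD D (fun j => dsig (Y j) t s) (fun j => dsig (Y j) t s) = (cos gamma) ^ 2
     /\ dotD D (fun j => dtau (Y j) t s) (fun j => dsig (Y j) t s) = 0) ->
  (EulerLagrange D rho U (fun t _ => t) Y <->
   forall t s, U (t, s) -> forall i, In i (idx D) ->
     (2 * (cos gamma) ^ 2 / (1 + (cos gamma) ^ 2)) * dtau (dtau (Y i)) t s
     - dsig (dsig (Y i)) t s = 0).
Proof.
  intros Hrho Hg HU _ _ Hc.
  assert (Hcpos : 0 < cos gamma) by (apply cos_gt_0; lra).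
  assert (Hs2 : sin gamma ^ 2 = 1 - cos gamma ^ 2).
  { pose proof (sin2_cos2 gamma) as H. unfold Rsqr in H. simpl. lra. }
  set (c := cos gamma) in *.
  assert (dT : forall t s, dtau (fun t _ => t) t s = 1).
  { intros; unfold dtau; apply Derive_id. }
  assert (dS : forall t s, dsig (fun t (_ : R) => t) t s = 0).
  { intros; unfold dsig; apply Derive_const. }
  assert (ET : forall t s, U (t, s) ->
    dtau (along (dL_dTdot D rho) (fun t _ => t) Y) t s
    + dsig (along (dL_dTp D rho) (fun t _ => t) Y) t s = 0).
  { intros t s Hts. unfold dtau at 1, dsig at 1.
    rewrite (Derive_ext_loc _ (fun _ => Derive (fun a' => rho * ((sin gamma ^ 2 * c ^ 2 - 0 ^ 2) /
       (2 * sqrt (a' ^ 2 * c ^ 2 + 0 ^ 2 * sin gamma ^ 2 - 2 * a' * 0 * 0)) -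
       sqrt (a' ^ 2 * c ^ 2 + 0 ^ 2 * sin gamma ^ 2 - 2 * a' * 0 * 0))) 1)).
    2:{ generalize (loc_t U t s HU Hts). apply filter_imp. intros t' Ht'.
        unfold along. rewrite dT, dS. unfold dL_dTdot, Lns, Nns, A2.
        destruct (Hc t' s Ht') as [h1 [h2 h3]]. rewrite h1, h2, h3. reflexivity. }
    rewrite (Derive_ext_loc _ (fun _ => Derive (fun b' => rho * ((sin gamma ^ 2 * c ^ 2 - 0 ^ 2) /
       (2 * sqrt (1 ^ 2 * c ^ 2 + b' ^ 2 * sin gamma ^ 2 - 2 * 1 * b' * 0)) -
       sqrt (1 ^ 2 * c ^ 2 + b' ^ 2 * sin gamma ^ 2 - 2 * 1 * b' * 0))) 0) s).
    2:{ generalize (loc_s U t s HU Hts). apply filter_imp. intros s' Hs'.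
        unfold along. rewrite dT, dS. unfold dL_dTp, Lns, Nns, A2.
        destruct (Hc t s' Hs') as [h1 [h2 h3]]. rewrite h1, h2, h3. reflexivity. }
    rewrite !Derive_const. ring. }
  assert (EY : forall t s, U (t, s) -> forall i, In i (idx D) ->
    dtau (along (dL_dYdot D rho i) (fun t _ => t) Y) t s
    + dsig (along (dL_dYp D rho i) (fun t _ => t) Y) t s
    = rho * (1 + c ^ 2) / (2 * c) *
      ((2 * c ^ 2 / (1 + c ^ 2)) * dtau (dtau (Y i)) t s - dsig (dsig (Y i)) t s)).
  { intros t s Hts i Hi. unfold dtau at 1, dsig at 1.
    rewrite (Derive_ext_loc _ (fun t' => rho * c * dtau (Y i) t' s)).
    2:{ generalize (loc_t U t s HU Hts). apply filter_imp. intros t' Ht'.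
        unfold along. rewrite dT, dS.
        destruct (Hc t' s Ht') as [h1 [h2 h3]].
        apply (dYdot_val D rho i _ _ c Hi Hcpos h2 h3). }
    rewrite (Derive_ext_loc _ (fun s' => - (rho * (1 + c ^ 2) / (2 * c)) * dsig (Y i) t s') s).
    2:{ generalize (loc_s U t s HU Hts). apply filter_imp. intros s' Hs'.
        unfold along. rewrite dT, dS.
        destruct (Hc t s' Hs') as [h1 [h2 h3]].
        apply (dYp_val D rho i _ _ c Hi Hcpos h2 h3). rewrite h1; exact Hs2. }
    rewrite !Derive_scal.
    change (dtau (dtau (Y i)) t s) with (Derive (fun t' => dtau (Y i) t' s) t).
    change (dsig (dsig (Y i)) t s) with (Derive (fun s' => dsig (Y i) t s') s).
    change (Derive (dsig (Y i) t) s) with (Derive (fun s' => dsig (Y i) t s') s).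
    generalize (Derive (fun t' => dtau (Y i) t' s) t) (Derive (fun s' => dsig (Y i) t s') s).
    intros A B. assert (c <> 0) by lra. assert (1 + c ^ 2 <> 0) by nra.
    field; auto. }
  split.
  - intros HEL t s Hts i Hi.
    destruct (HEL t s Hts) as [_ H2]. specialize (H2 i Hi).
    rewrite EY in H2 by auto.
    apply Rmult_integral in H2. destruct H2 as [H2|H2]; auto.
    exfalso. assert (0 < rho * (1 + c ^ 2) / (2 * c)).
    { apply Rdiv_lt_0_compat; nra. } lra.
  - intros H t s Hts. split; [apply ET; auto|].
    intros i Hi. rewrite EY by auto. rewrite H by auto. ring.
Qed.
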